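(* Consider a coalition $\mathcal{S}_l$ (a finite nonempty set of devices) associated with edge server $l$, with parameters $\rho_l>0$, $\xi>0$, $x_l\in\mathbb{R}$, $\alpha_l>0$, a positive integer $K_l$ of edge aggregations, a global aggregation interval $T^{\text{cloud}}>0$, bandwidth $B_l>0$, model size $s>0$, noise power $\sigma^2>0$, and for each device $i\in\mathcal{S}_l$ a transmit power $P_i>0$, channel gain $h_{i,l}>0$, CPU frequency $f_i>0$ and CPU cycles per data unit $C_i>0$. Set $R_i=\frac{B_l}{|\mathcal{S}_l|}\log\!\big(1+\frac{P_ih_{i,l}}{\sigma^2}\big)$ and assume $\frac{s}{R_i}\le \frac{T^{\text{cloud}}}{K_l}$ for all $i\in\mathcal{S}_l$, with strict inequality for at least one $i$. Consider the noncooperative game in which each device $i\in\mathcal{S}_l$ chooses an amount of local training data $D_i\ge 0$ subject to the delay constraint $\frac{D_iC_i}{f_i}+\frac{s}{R_i}\le \frac{T^{\text{cloud}}}{K_l}$, and receives utility $$u_i(D)=\rho_l\xi\sqrt{K_l\sum_{j\in\mathcal{S}_l}D_j}\;\frac{D_i}{\sum_{j\in\mathcal{S}_l}D_j}+x_l-\alpha_l\Big(\sum_{j\in\mathcal{S}_l}R_j\Big)^2$$ (the first term being interpreted as $0$ when $\sum_j D_j=0$). Then the profile $D^*=(D_i^* )_{i\in\mathcal{S}_l}$ with $$D_i^*=\Big(\frac{T^{\text{cloud}}}{K_l}-\frac{s}{R_i}\Big)\frac{f_i}{C_i}=\Big(\frac{T^{\text{cloud}}}{K_l}-\frac{s|\mathcal{S}_l|}{B_l\log(1+\frac{P_ih_{i,l}}{\sigma^2})}\Big)\frac{f_i}{C_i}$$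 is a Nash equilibrium of this game.
   Context: This models the devices of one coalition in hierarchical federated learning: each device is rewarded with a share, proportional to its data contribution, of the coalition's training revenue $\rho_l\xi\sqrt{K_l\sum_j D_j}$, plus a fixed reward $x_l$, minus a congestion cost depending on the coalition's total uplink rate. A Nash equilibrium is a feasible profile from which no device can increase its utility by unilaterally changing its own feasible choice $D_i$. *)

(* Defs.v *)
From mathcomp Require Import all_boot all_order all_algebra.
From mathcomp Require Import all_classical all_reals all_analysis.
Set Implicit Arguments. Unset Strict Implicit. Unset Printing Implicit Defensive.
Import Order.TTheory GRing.Theory Num.Theory.
Local Open Scope ring_scope.

Definition rate (R : realType) (S : finType) (B sigma2 : R) (P h : S -> R) (i : S) : R :=
  B / #|S|%:R * ln (1 + P i * h i / sigma2).

Definition utility (R : realType) (S : finType)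
  (rho xi x alpha : R) (K : nat) (Rt : S -> R) (D : S -> R) (i : S) : R :=
  let tot := \sum_(j : S) D j in
  (if tot == 0 then 0 else rho * xi * Num.sqrt (K%:R * tot) * (D i / tot))
  + x - alpha * (\sum_(j : S) Rt j) ^+ 2.

Definition feasible_choice (R : realType) (S : finType)
  (T s : R) (K : nat) (C f Rt : S -> R) (i : S) (d : R) : Prop :=
  0 <= d /\ d * C i / f i + s / Rt i <= T / K%:R.

Definition deviate (R : realType) (S : finType) (D : S -> R) (i : S) (d : R) : S -> R :=
  fun j => if j == i then d else D j.

Definition is_nash (R : realType) (S : finType)
  (feas : S -> R -> Prop) (u : (S -> R) -> S -> R) (D : S -> R) : Prop :=
  (forall i, feas i (D i)) /\
  (forall i d, feas i d -> u (deviate D i d) i <= u D i).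

(* Main.v *)
Require Import Defs.
From mathcomp Require Import all_boot all_order all_algebra.
From mathcomp Require Import all_classical all_reals all_analysis.
From mathcomp Require Import ring lra.
Import Order.TTheory GRing.Theory Num.Theory.
Local Open Scope ring_scope.

Lemma key (R : realType) (d e A k : R) : 0 <= d -> d <= e -> 0 <= A -> 0 <= k ->
  (if d + A == 0 then 0 else Num.sqrt (k * (d + A)) * (d / (d + A))) <=
  (if e + A == 0 then 0 else Num.sqrt (k * (e + A)) * (e / (e + A))).
Proof.
move=> hd hde hA hk.
have he : 0 <= e by apply: le_trans hde.
have hRe : 0 <= (if e + A == 0 then 0 else Num.sqrt (k * (e + A)) * (e / (e + A))).
  case: ifP => _ //; apply: mulr_ge0; first exact: sqrtr_ge0.
  by apply: divr_ge0 => //; apply: addr_ge0.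
case: eqP => [//|/eqP hdA].
have pdA : 0 < d + A by rewrite lt_neqAle eq_sym hdA addr_ge0.
have peA : 0 < e + A by lra.
rewrite gt_eqF //.
rewrite !sqrtrM //.
set u := Num.sqrt (d + A); set v := Num.sqrt (e + A).
have pu : 0 < u by rewrite sqrtr_gt0.
have pv : 0 < v by rewrite sqrtr_gt0.
have u2 : u ^+ 2 = d + A by rewrite sqr_sqrtr // ltW.
have v2 : v ^+ 2 = e + A by rewrite sqr_sqrtr // ltW.
rewrite -u2 -v2 -!mulrA; apply: ler_wpM2l; first exact: sqrtr_ge0.
have -> : u * (d / u ^+ 2) = d / u by field; exact: lt0r_neq0.
have -> : v * (e / v ^+ 2) = e / v by field; exact: lt0r_neq0.
rewrite ler_pdivrMr // mulrAC ler_pdivlMr //.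
have h1 : u <= v by rewrite /u /v ler_sqrt //; lra.
have sq : (d * v) ^+ 2 <= (e * u) ^+ 2.
  rewrite !exprMn u2 v2.
  have h2 : 0 <= d * e * (e - d) by apply: mulr_ge0; [apply: mulr_ge0 | lra].
  have h3 : 0 <= A * ((e - d) * (e + d)) by apply: mulr_ge0 => //; apply: mulr_ge0; lra.
  nra.
have : 0 <= d * v by apply: mulr_ge0 => //; lra.
have : 0 <= e * u by apply: mulr_ge0 => //; lra.
nra.
Qed.

Theorem theorem1 (R : realType) (S : finType)
  (rho xi x alpha T B s sigma2 : R) (K : nat)
  (P h f C : S -> R)
  (hS : (0 < #|S|)%N)
  (hrho : 0 < rho) (hxi : 0 < xi) (halpha : 0 < alpha) (hK : (0 < K)%N)
  (hT : 0 < T) (hB : 0 < B) (hs : 0 < s) (hsigma : 0 < sigma2)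
  (hP : forall i, 0 < P i) (hh : forall i, 0 < h i)
  (hf : forall i, 0 < f i) (hC : forall i, 0 < C i)
  (hdelay : forall i, s / rate B sigma2 P h i <= T / K%:R)
  (hstrict : exists i, s / rate B sigma2 P h i < T / K%:R) :
  let Rt := rate B sigma2 P h in
  is_nash (feasible_choice T s K C f Rt)
    (utility rho xi x alpha K Rt)
    (fun i => (T / K%:R - s / Rt i) * (f i / C i)).
Proof.
move=> Rt.
set Ds := fun i => (T / K%:R - s / Rt i) * (f i / C i).
have hDs : forall i, 0 <= Ds i.
  move=> i; apply: mulr_ge0; first by rewrite subr_ge0; exact: hdelay.
  by apply: divr_ge0; apply: ltW.
split.
  move=> i; split; first exact: hDs.
  rewrite /Ds.
  have hf0 : f i != 0 by exact: lt0r_neq0.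
  have hC0 : C i != 0 by exact: lt0r_neq0.
  have hK0 : K%:R != 0 :> R by rewrite pnatr_eq0 -lt0n.
  rewrite le_eqVlt; apply/orP; left; apply/eqP; field.
  have hRt : Rt i != 0.
    apply: lt0r_neq0; rewrite /Rt /rate; apply: mulr_gt0.
      by apply: divr_gt0 => //; rewrite ltr0n.
    apply: ln_gt0; rewrite ltrDl; apply: divr_gt0 => //; exact: mulr_gt0.
  by rewrite hK0 hRt hf0 hC0.
move=> i d [hd0 hdle].
have hf0 : f i != 0 by exact: lt0r_neq0.
have hC0 : C i != 0 by exact: lt0r_neq0.
have hdi : d <= Ds i.
  have h1 : d * C i / f i <= T / K%:R - s / Rt i by lra.
  have -> : d = (d * C i / f i) * (f i / C i) by field; apply/andP.
  apply: ler_wpM2r => //; by apply: divr_ge0; apply: ltW.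
set A := \sum_(j | j != i) Ds j.
have hA : 0 <= A by apply: sumr_ge0 => j _.
have s1 : \sum_j deviate Ds i d j = d + A.
  rewrite (bigD1 i) //= /deviate eqxx; congr (_ + _).
  by apply: eq_bigr => j /negbTE ->.
have s2 : \sum_j Ds j = Ds i + A by rewrite (bigD1 i).
rewrite /utility s1 s2 /deviate eqxx.
apply: lerD => //; apply: lerD => //.
have E : forall (t a b : R), (if t == 0 then 0 else rho * xi * a * b)
   = rho * xi * (if t == 0 then 0 else a * b).
  by move=> t a b; case: ifP; rewrite ?mulr0 ?mulrA.
rewrite !E; apply: ler_wpM2l; first by apply: mulr_ge0; apply: ltW.
exact: (@key R d (Ds i) A K%:R hd0 hdi hA (ler0n _ K)).
Qed.
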